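(* Let $0<b\le 0.01$ and let $z^*=(x_3,x,x,y_3,y,y)$ with $x_3,y_3,x,y>0$ be a point of the curve of equilibria $\mathcal C$. Then the Jacobian matrix $\big[\partial F_i/\partial z_j(z^* )\big]_{i,j}$ of $F$ at $z^*$ has one eigenvalue equal to $0$ (corresponding to the direction along $\mathcal C$) and its five other eigenvalues all have strictly negative real part.
   Context: Haploid unlinked subfunctionalization model with mutation rate $b$, coordinates $z=(x_3,x_2,x_1,y_3,y_2,y_1)$, $\alpha=1-3b$, $w=x_3+y_3-x_3y_3+x_1y_2+x_2y_1$, vector field $F$: $F_{x_3}=x_3(\alpha-w)$; $F_{x_2}=-x_2w+x_2(y_3+y_1)+bx_3-2bx_2$; $F_{x_1}=-x_1w+x_1(y_3+y_2)+bx_3-2bx_1$; $F_{y_3}=y_3(\alpha-w)$; $F_{y_2}=-y_2w+y_2(x_3+x_1)+by_3-2by_2$; $F_{y_1}=-y_1w+y_1(x_3+x_2)+by_3-2by_1$. The curve of equilibria $\mathcal C$ is the one-parameter family of fixed points of $dz/dt=F(z)$ with $x_1=x_2=x$, $y_1=y_2=y$, parametrized by $x_3$ via $y_3=\frac{-d_1+\sqrt{d_1^2-4d_0d_2}}{2d_2}$ with $d_2=-(1-x_3)^2$, $d_1=2(1-x_3)^2-4b(1-x_3)+2b^2(1+x_3)$, $d_0=-(1-x_3)^2+4b(1-x_3)-b^2(5-2x_3)+b^3$, and $x=\frac{\Gamma-2bx_3}{2(y_3-\beta)}$, $y=\frac{\Gamma-2by_3}{2(x_3-\beta)}$, $\beta=1-b$,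 $\Gamma=x_3+y_3-x_3y_3-\alpha$. *)

(* Defs.v *)
(* Ground field: an arbitrary real closed field R
   (the statement is first-order over the reals, so this is the real
   statement, stated for every rcfType). *)
From HB Require Import structures.
From mathcomp Require Import all_boot all_order all_algebra.
Set Implicit Arguments. Unset Strict Implicit. Unset Printing Implicit Defensive.
Import Order.TTheory GRing.Theory Num.Theory.
Local Open Scope ring_scope.

(* Coordinates z = (x3,x2,x1,y3,y2,y1) are indexed by 'I_6 in this order:
   z 0 = x3, z 1 = x2, z 2 = x1, z 3 = y3, z 4 = y2, z 5 = y1.
   The vector field F is polynomial, so we define it over any commutative
   ring S (this lets us evaluate it on polynomials to differentiate). *)
Definition Fsub (S : comNzRingType) (b : S) (z : 'I_6 -> S) : 'I_6 -> S :=
  fun i =>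
  let x3 := z (inord 0) in let x2 := z (inord 1) in let x1 := z (inord 2) in
  let y3 := z (inord 3) in let y2 := z (inord 4) in let y1 := z (inord 5) in
  let alpha := 1 - 3%:R * b in
  let w := x3 + y3 - x3 * y3 + x1 * y2 + x2 * y1 in
  match val i with
  | 0 => x3 * (alpha - w)
  | 1 => - x2 * w + x2 * (y3 + y1) + b * x3 - 2%:R * b * x2
  | 2 => - x1 * w + x1 * (y3 + y2) + b * x3 - 2%:R * b * x1
  | 3 => y3 * (alpha - w)
  | 4 => - y2 * w + y2 * (x3 + x1) + b * y3 - 2%:R * b * y2
  | _ => - y1 * w + y1 * (x3 + x2) + b * y3 - 2%:R * b * y1
  end.

Definition partialF (R : rcfType) (b : R) (z : 'I_6 -> R) (i j : 'I_6) : R :=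
  ((Fsub (b%:P) (fun k => (z k)%:P + (if k == j then 'X else 0)) i)^`()).[0].

Definition jacobianF (R : rcfType) (b : R) (z : 'I_6 -> R) : 'M[R]_6 :=
  \matrix_(i, j) partialF b z i j.

(* Complex numbers as pairs (re, im) and evaluation of a real polynomial
   at a complex number (Horner scheme). *)
Definition cadd (R : rcfType) (a c : R * R) : R * R := (a.1 + c.1, a.2 + c.2).
Definition cmul (R : rcfType) (a c : R * R) : R * R :=
  (a.1 * c.1 - a.2 * c.2, a.1 * c.2 + a.2 * c.1).
Definition ceval (R : rcfType) (p : {poly R}) (z : R * R) : R * R :=
  foldr (fun c acc => cadd (c, 0) (cmul acc z)) (0, 0) (polyseq p).

Definition ceigenvalue (R : rcfType) (n : nat) (A : 'M[R]_n) (lam : R * R) : Prop :=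
  ceval (char_poly A) lam = (0, 0).

Definition symPoint (R : rcfType) (x3 x y3 y : R) : 'I_6 -> R :=
  fun i => match val i with
           | 0 => x3 | 1 => x | 2 => x | 3 => y3 | 4 => y | _ => y end.

Definition onCurveC (R : rcfType) (b x3 x y3 y : R) : Prop :=
  forall i : 'I_6, Fsub b (symPoint x3 x y3 y) i = 0.

(* Main.v *)
Require Import Defs.
From HB Require Import structures.
From mathcomp Require Import all_boot all_order all_algebra.
From Stdlib Require Import Ring FunctionalExtensionality.
Import Order.TTheory GRing.Theory Num.Theory.
Local Open Scope ring_scope.
Set Implicit Arguments. Unset Strict Implicit. Unset Printing Implicit Defensive.

Section Main.
Variable R : rcfType.

Definition radd (x y : R) : R := x + y.
Definition rmul (x y : R) : R := x * y.
Definition ropp (x : R) : R := - x.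
Definition rsub (x y : R) : R := x - y.
Definition r0 : R := 0.
Definition r1 : R := 1.
Lemma RTh : @ring_theory R r0 r1 radd rmul rsub ropp eq.
Proof.
rewrite /radd /rmul /rsub /ropp /r0 /r1.
constructor=> //; [exact: add0r|exact: addrC|exact: addrA|exact: mul1r|exact: mulrC|exact: mulrA|exact: mulrDl|exact: subrr].
Qed.
Add Ring Rr : RTh.
Lemma raddE (x y : R) : x + y = radd x y. Proof. by []. Qed.
Lemma rmulE (x y : R) : x * y = rmul x y. Proof. by []. Qed.
Lemma roppE (x : R) : - x = ropp x. Proof. by []. Qed.
Lemma r0E : 0 = r0 :> R. Proof. by []. Qed.
Lemma r1E : 1 = r1 :> R. Proof. by []. Qed.
Lemma rnatS n : n.+1%:R = 1 + n%:R :> R. Proof. by rewrite mulrS. Qed.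
Lemma rexpS (x : R) n : x ^+ n.+1 = x * x ^+ n. Proof. by rewrite exprS. Qed.

Ltac rprep := rewrite /= ?rexpS ?expr0 ?rnatS ?mulr0n.
Ltac rring := rprep; match goal with |- @eq _ ?a ?b => change (@eq R a b) end;
  rewrite ?raddE ?rmulE ?roppE ?r0E ?r1E; ring.


Definition CC := (R * R)%type.
HB.instance Definition _ := GRing.Zmodule.copy CC (R * R)%type.
Definition cone : CC := (1, 0).
Definition cm (a c : CC) : CC := cmul a c.
Lemma cmA : associative cm.
Proof. by move=> [a1 a2] [b1 b2] [c1 c2]; rewrite /cm /cmul /=; congr (_, _); rring. Qed.
Lemma cmC : commutative cm.
Proof. by move=> [a1 a2] [b1 b2]; rewrite /cm /cmul /=; congr (_, _); rring. Qed.
Lemma cm1 : left_id cone cm.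
Proof. by move=> [a1 a2]; rewrite /cm /cmul /=; congr (_, _); rring. Qed.
Lemma cmD : left_distributive cm +%R.
Proof. by move=> [a1 a2] [b1 b2] [c1 c2]; rewrite /cm /cmul /=; congr (_, _); rring. Qed.
Lemma cone0 : cone != 0.
Proof. by apply/eqP => [[]] /eqP; rewrite oner_eq0. Qed.
HB.instance Definition _ := GRing.Zmodule_isComNzRing.Build CC cmA cmC cm1 cmD cone0.
Definition cf (c : R) : CC := (c, 0).
Lemma cf_zmod : zmod_morphism cf.
Proof. by move=> a c; rewrite /cf; congr (_, _) => /=; rewrite subr0. Qed.
Lemma cf_mon : monoid_morphism cf.
Proof. split => // a c; rewrite /cf /= /cm /cmul /=; congr (_, _); rring. Qed.
HB.instance Definition _ := GRing.isZmodMorphism.Build R CC cf cf_zmod.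
HB.instance Definition _ := GRing.isMonoidMorphism.Build R CC cf cf_mon.
Lemma ceval_map (p : {poly R}) (z : CC) : ceval p z = (map_poly cf p).[z].
Proof.
rewrite map_polyE horner_Poly /ceval; elim: (polyseq p) => [|c s IH] //=.
by rewrite IH /cadd /=; congr (_, _); rring.
Qed.
Lemma cevalM (p q : {poly R}) (z : CC) : ceval (p * q) z = cmul (ceval p z) (ceval q z).
Proof. by rewrite !ceval_map rmorphM hornerM. Qed.

Section Mx.
Variable T : comNzRingType.
Definition tadd (x y : T) : T := x + y.
Definition tmul (x y : T) : T := x * y.
Definition topp (x : T) : T := - x.
Definition tsub (x y : T) : T := x - y.
Definition t0 : T := 0.
Definition t1 : T := 1.
Lemma TTh : @ring_theory T t0 t1 tadd tmul tsub topp eq.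
Proof.
rewrite /tadd /tmul /tsub /topp /t0 /t1.
constructor=> //; [exact: add0r|exact: addrC|exact: addrA|exact: mul1r|exact: mulrC|exact: mulrA|exact: mulrDl|exact: subrr].
Qed.
Add Ring Tr : TTh.
Lemma taddE (x y : T) : x + y = tadd x y. Proof. by []. Qed.
Lemma tmulE (x y : T) : x * y = tmul x y. Proof. by []. Qed.
Lemma toppE (x : T) : - x = topp x. Proof. by []. Qed.
Lemma t0E : 0 = t0 :> T. Proof. by []. Qed.
Lemma t1E : 1 = t1 :> T. Proof. by []. Qed.
Lemma tnatS n : n.+1%:R = 1 + n%:R :> T. Proof. by rewrite mulrS. Qed.
Lemma texpS (x : T) n : x ^+ n.+1 = x * x ^+ n. Proof. by rewrite exprS. Qed.
Ltac tring := rewrite /= ?texpS ?expr0 ?tnatS ?mulr0n; match goal with |- @eq _ ?a ?b => change (@eq T a b) end;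
  rewrite ?taddE ?tmulE ?toppE ?t0E ?t1E; ring.

Definition mkM n (f : nat -> nat -> T) : 'M[T]_n := \matrix_(i < n, j < n) f i j.

Lemma mkME n (f : nat -> nat -> T) i j : mkM n f i j = f i j.
Proof. by rewrite mxE. Qed.

Lemma det_split n1 n2 (f : nat -> nat -> T) :
  (forall i j, (i < n1)%N -> (j < n2)%N -> f i (n1 + j)%N = 0) ->
  \det (mkM (n1 + n2) f) = \det (mkM n1 f) * \det (mkM n2 (fun i j => f (n1 + i)%N (n1 + j)%N)).
Proof.
move=> H; rewrite -[mkM _ f]submxK.
have -> : ursubmx (mkM (n1 + n2) f) = 0.
  by apply/matrixP => i j; rewrite !mxE /= H.
rewrite det_lblock; congr (_ * _); congr (\det _); apply/matrixP => i j; by rewrite !mxE.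
Qed.

Lemma det_mk1 (f : nat -> nat -> T) : \det (mkM 1 f) = f 0%N 0%N.
Proof. by rewrite det_mx11 mxE. Qed.

Lemma det_mk2 (f : nat -> nat -> T) : \det (mkM 2 f) = f 0%N 0%N * f 1%N 1%N - f 0%N 1%N * f 1%N 0%N.
Proof.
rewrite (expand_det_row _ ord0) !big_ord_recr big_ord0 /= add0r.
rewrite /cofactor !det_mx11 !mxE /= /bump /= ?(addn0, add0n, addSn, addnS); tring.
Qed.

Lemma minor_mk n (f : nat -> nat -> T) (i j : 'I_n.+1) :
  row' i (col' j (mkM n.+1 f)) = mkM n (fun a b => f (bump i a) (bump j b)).
Proof. by apply/matrixP => a b; rewrite !mxE. Qed.

Lemma det_mk3 (f : nat -> nat -> T) : \det (mkM 3 f) =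
  f 0%N 0%N * (f 1%N 1%N * f 2%N 2%N - f 1%N 2%N * f 2%N 1%N) - f 0%N 1%N * (f 1%N 0%N * f 2%N 2%N - f 1%N 2%N * f 2%N 0%N)
  + f 0%N 2%N * (f 1%N 0%N * f 2%N 1%N - f 1%N 1%N * f 2%N 0%N).
Proof.
rewrite (expand_det_row _ ord0) !big_ord_recr big_ord0 /= add0r.
rewrite /cofactor !minor_mk !det_mk2 !mkME /= /bump /= ?(addn0, add0n, addSn, addnS); tring.
Qed.

Lemma det_split_u n1 n2 (f : nat -> nat -> T) :
  (forall i j, (i < n2)%N -> (j < n1)%N -> f (n1 + i)%N j = 0) ->
  \det (mkM (n1 + n2) f) = \det (mkM n1 f) * \det (mkM n2 (fun i j => f (n1 + i)%N (n1 + j)%N)).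
Proof.
move=> H; rewrite -[mkM _ f]submxK.
have -> : dlsubmx (mkM (n1 + n2) f) = 0.
  by apply/matrixP => i j; rewrite !mxE /= H.
rewrite det_ublock; congr (_ * _); congr (\det _); apply/matrixP => i j; by rewrite !mxE.
Qed.

Lemma det_row0 n (f : nat -> nat -> T) : \det (mkM n.+1 f) =
  \sum_(0 <= j < n.+1) f 0%N j * ((-1) ^+ j * \det (mkM n (fun a c => f a.+1 (bump j c)))).
Proof.
rewrite (expand_det_row _ ord0) big_mkord; apply: eq_bigr => j _.
by rewrite mkME /cofactor minor_mk add0n.
Qed.

Lemma mul_mk n (f g : nat -> nat -> T) :
  mkM n f *m mkM n g = mkM n (fun i j => \sum_(0 <= k < n) f i k * g k j).
Proof.
apply/matrixP => i j; rewrite !mxE big_mkord; apply: eq_bigr => k _; by rewrite !mkME.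
Qed.
End Mx.

Notation PR := {poly R}.
Definition padd (x y : PR) : PR := x + y.
Definition pmul (x y : PR) : PR := x * y.
Definition popp (x : PR) : PR := - x.
Definition psub (x y : PR) : PR := x - y.
Definition p0 : PR := 0.
Definition p1 : PR := 1.
Lemma PTh : @ring_theory PR p0 p1 padd pmul psub popp eq.
Proof.
rewrite /padd /pmul /psub /popp /p0 /p1.
constructor=> //; [exact: add0r|exact: addrC|exact: addrA|exact: mul1r|exact: mulrC|exact: mulrA|exact: mulrDl|exact: subrr].
Qed.
Add Ring Pr : PTh.
Lemma paddE (x y : PR) : x + y = padd x y. Proof. by []. Qed.
Lemma pmulE (x y : PR) : x * y = pmul x y. Proof. by []. Qed.
Lemma poppE (x : PR) : - x = popp x. Proof. by []. Qed.
Lemma p0E : 0 = p0 :> PR. Proof. by []. Qed.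
Lemma p1E : 1 = p1 :> PR. Proof. by []. Qed.
Lemma pnatS n : n.+1%:R = 1 + n%:R :> PR. Proof. by rewrite mulrS. Qed.
Lemma pexpS (x : PR) n : x ^+ n.+1 = x * x ^+ n. Proof. by rewrite exprS. Qed.
Definition pc (c : R) : PR := c%:P.
Lemma pcE c : c%:P = pc c. Proof. by []. Qed.
Definition pX : PR := 'X.
Lemma pXE : 'X = pX. Proof. by []. Qed.
Ltac pring := rewrite /= ?pexpS ?expr0 ?pnatS ?mulr0n; match goal with |- @eq _ ?a ?b => change (@eq PR a b) end;
  rewrite ?pcE ?pXE ?paddE ?pmulE ?poppE ?p0E ?p1E; ring.

Lemma char_mk n (f : nat -> nat -> R) :
  char_poly_mx (mkM n f) = mkM n (fun i j => 'X *+ (i == j)%N - (f i j)%:P).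
Proof. by apply/matrixP => i j; rewrite !mxE. Qed.

Lemma char_sim n (A B Q : 'M[R]_n) : A *m Q = Q *m B -> \det Q != 0 ->
  char_poly A = char_poly B.
Proof.
move=> hAB hQ.
pose Qp := map_mx (@polyC R) Q.
have key : char_poly_mx A *m Qp = Qp *m char_poly_mx B.
  rewrite /char_poly_mx mulmxBl mulmxBr -!map_mxM hAB.
  by rewrite -scalar_mxC.
have := congr1 determinant key; rewrite !det_mulmx /Qp det_map_mx.
rewrite [_ * char_poly B]mulrC => /mulIf; apply.
by rewrite polyC_eq0.
Qed.

Definition cA2 (k : nat -> nat -> R) := - (k 0%N 0%N + k 1%N 1%N + k 2%N 2%N).
Definition cA1 (k : nat -> nat -> R) :=
  (k 0%N 0%N * k 1%N 1%N - k 0%N 1%N * k 1%N 0%N) + (k 0%N 0%N * k 2%N 2%N - k 0%N 2%N * k 2%N 0%N)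
  + (k 1%N 1%N * k 2%N 2%N - k 1%N 2%N * k 2%N 1%N).
Definition cA0 (k : nat -> nat -> R) := - (
  k 0%N 0%N * (k 1%N 1%N * k 2%N 2%N - k 1%N 2%N * k 2%N 1%N) - k 0%N 1%N * (k 1%N 0%N * k 2%N 2%N - k 1%N 2%N * k 2%N 0%N)
  + k 0%N 2%N * (k 1%N 0%N * k 2%N 1%N - k 1%N 1%N * k 2%N 0%N)).
Definition cB1 (k : nat -> nat -> R) := - (k 0%N 0%N + k 1%N 1%N).
Definition cB0 (k : nat -> nat -> R) := k 0%N 0%N * k 1%N 1%N - k 0%N 1%N * k 1%N 0%N.


Lemma char3 (k : nat -> nat -> R) :
  \det (mkM 3 (fun i j => 'X *+ (i == j)%N - (k i j)%:P)) =
  'X ^+ 3 + (cA2 k)%:P * 'X ^+ 2 + (cA1 k)%:P * 'X + (cA0 k)%:P.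
Proof.
rewrite det_mk3 /cA2 /cA1 /cA0 /= !mulr0n !mulr1n.
rewrite !(polyCD, polyCN, polyCM, polyCB).
pring.
Qed.

Lemma char2 (k : nat -> nat -> R) :
  \det (mkM 2 (fun i j => 'X *+ (i == j)%N - (k i j)%:P)) =
  'X ^+ 2 + (cB1 k)%:P * 'X + (cB0 k)%:P.
Proof.
rewrite det_mk2 /cB1 /cB0 /= !mulr0n !mulr1n.
rewrite !(polyCD, polyCN, polyCM, polyCB).
pring.
Qed.
Definition Jf (b x3 x y3 y : R) : nat -> nat -> R := fun i j =>
  match i, j with
  | 0, 0 => (- 3%:R * b + 2%:R * x3 * y3 - 2%:R * x3 - 2%:R * x * y - y3 + 1%:R)
  | 0, 1 => (- x3 * y)
  | 0, 2 => (- x3 * y)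
  | 0, 3 => (x3 * x3 - x3)
  | 0, 4 => (- x3 * x)
  | 0, 5 => (- x3 * x)
  | 1, 0 => (b + x * y3 - x)
  | 1, 1 => (- 2%:R * b + x3 * y3 - x3 - 3%:R * x * y + y)
  | 1, 2 => (- x * y)
  | 1, 3 => (x3 * x)
  | 1, 4 => (- x * x)
  | 1, 5 => (- x * x + x)
  | 2, 0 => (b + x * y3 - x)
  | 2, 1 => (- x * y)
  | 2, 2 => (- 2%:R * b + x3 * y3 - x3 - 3%:R * x * y + y)
  | 2, 3 => (x3 * x)
  | 2, 4 => (- x * x + x)
  | 2, 5 => (- x * x)
  | 3, 0 => (y3 * y3 - y3)
  | 3, 1 => (- y3 * y)
  | 3, 2 => (- y3 * y)
  | 3, 3 => (- 3%:R * b + 2%:R * x3 * y3 - x3 - 2%:R * x * y - 2%:R * y3 + 1%:R)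
  | 3, 4 => (- x * y3)
  | 3, 5 => (- x * y3)
  | 4, 0 => (y3 * y)
  | 4, 1 => (- y * y)
  | 4, 2 => (- y * y + y)
  | 4, 3 => (b + x3 * y - y)
  | 4, 4 => (- 2%:R * b + x3 * y3 - 3%:R * x * y + x - y3)
  | 4, 5 => (- x * y)
  | 5, 0 => (y3 * y)
  | 5, 1 => (- y * y + y)
  | 5, 2 => (- y * y)
  | 5, 3 => (b + x3 * y - y)
  | 5, 4 => (- x * y)
  | 5, 5 => (- 2%:R * b + x3 * y3 - 3%:R * x * y + x - y3)
  | _, _ => 0 end.
Definition Qf (b x3 x y3 y : R) : nat -> nat -> R := fun i j =>
  match i, j with
  | 0, 0 => (1%:R)
  | 0, 1 => (x3)
  | 1, 2 => (1%:R)
  | 1, 4 => (1%:R)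
  | 2, 2 => (1%:R)
  | 2, 4 => (- 1%:R)
  | 3, 1 => (y3)
  | 4, 3 => (1%:R)
  | 4, 5 => (1%:R)
  | 5, 3 => (1%:R)
  | 5, 5 => (- 1%:R)
  | _, _ => 0 end.
Definition Kf (b x3 x y3 y : R) : nat -> nat -> R := fun i j =>
  match i, j with
  | 1, 0 => (y3 - 1%:R)
  | 1, 1 => (2%:R * x3 * y3 - x3 - y3)
  | 1, 2 => (- 2%:R * y)
  | 1, 3 => (- 2%:R * x)
  | 2, 0 => (b + x * y3 - x)
  | 2, 1 => (b * x3 + 2%:R * x3 * x * y3 - x3 * x)
  | 2, 2 => (b - 2%:R * x * y + y3 + y - 1%:R)
  | 2, 3 => (- 2%:R * x * x + x)
  | 3, 0 => (y3 * y)
  | 3, 1 => (b * y3 + 2%:R * x3 * y3 * y - y3 * y)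
  | 3, 2 => (- 2%:R * y * y + y)
  | 3, 3 => (b + x3 - 2%:R * x * y + x - 1%:R)
  | 4, 4 => (b + y3 + y - 1%:R)
  | 4, 5 => (- x)
  | 5, 4 => (- y)
  | 5, 5 => (b + x3 + x - 1%:R)
  | _, _ => 0 end.

Lemma inord_eqE (m : nat) (j : 'I_6) : (m < 6)%N -> (inord m == j) = (m == val j).
Proof. by move=> hm; rewrite -val_eqE /= inordK. Qed.

Definition DD := (R * R)%type.
HB.instance Definition _ := GRing.Zmodule.copy DD (R * R)%type.
Definition done_ : DD := (1, 0).
Definition dm (a c : DD) : DD := (a.1 * c.1, a.1 * c.2 + a.2 * c.1).
Lemma dmA : associative dm.
Proof. by move=> [a1 a2] [b1 b2] [c1 c2]; rewrite /dm /=; congr (_, _); rring. Qed.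
Lemma dmC : commutative dm.
Proof. by move=> [a1 a2] [b1 b2]; rewrite /dm /=; congr (_, _); rring. Qed.
Lemma dm1 : left_id done_ dm.
Proof. by move=> [a1 a2]; rewrite /dm /=; congr (_, _); rring. Qed.
Lemma dmD : left_distributive dm +%R.
Proof. by move=> [a1 a2] [b1 b2] [c1 c2]; rewrite /dm /=; congr (_, _); rring. Qed.
Lemma done0 : done_ != 0.
Proof. by apply/eqP => [[]] /eqP; rewrite oner_eq0. Qed.
HB.instance Definition _ := GRing.Zmodule_isComNzRing.Build DD dmA dmC dm1 dmD done0.
Definition phi (p : {poly R}) : DD := (p.[0], p^`().[0]).
Lemma phi_zmod : zmod_morphism phi.
Proof. by move=> p q; rewrite /phi derivB !hornerD !hornerN. Qed.
Lemma phi_mon : monoid_morphism phi.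
Proof.
split; first by rewrite /phi hornerC -polyC1 derivC hornerC.
by move=> p q; rewrite /phi derivM !hornerD !hornerM /= /dm /=; congr (_, _); rring.
Qed.
HB.instance Definition _ := GRing.isZmodMorphism.Build {poly R} DD phi phi_zmod.
HB.instance Definition _ := GRing.isMonoidMorphism.Build {poly R} DD phi phi_mon.

Lemma Fsub_morph (S S' : comNzRingType) (f : {rmorphism S -> S'}) (b : S) z i :
  f (Fsub b z i) = Fsub (f b) (fun k => f (z k)) i.
Proof.
rewrite /Fsub; case: (val i) => [|[|[|[|[|n]]]]];
by rewrite !(rmorphD, rmorphM, rmorphN, rmorphB, rmorph1, rmorph_nat).
Qed.

Lemma Fsub_phi (b : {poly R}) z i : phi (Fsub b z i) = Fsub (phi b) (fun k => phi (z k)) i.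
Proof. exact: (Fsub_morph phi). Qed.

Lemma partialF_dual (b : R) z i j :
  partialF b z i j = (Fsub ((b, 0) : DD) (fun k => ((z k, (k == j)%:R) : DD)) i).2.
Proof.
rewrite /partialF.
have -> : (Fsub b%:P (fun k => (z k)%:P + (if k == j then 'X else 0)) i)^`().[0]
   = (phi (Fsub b%:P (fun k => (z k)%:P + (if k == j then 'X else 0)) i)).2 by [].
rewrite Fsub_phi; apply: (congr1 snd); f_equal.
  by rewrite /phi hornerC derivC hornerC.
apply: functional_extensionality => k; rewrite /phi; case: (k == j) => /=.
  by rewrite hornerD hornerC hornerX addr0 derivD derivC derivX add0r hornerC.
by rewrite hornerD hornerC horner0 addr0 derivD derivC deriv0 addr0 hornerC.
Qed.

Lemma jac_eq (b x3 x y3 y : R) :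
  jacobianF b (symPoint x3 x y3 y) = mkM 6 (Jf b x3 x y3 y).
Proof.
apply/matrixP => i j; rewrite !mxE partialF_dual /Fsub.
rewrite /symPoint /= !inordK // !inord_eqE //.
case: i => [[|[|[|[|[|[|i]]]]]] Hi] //; case: j => [[|[|[|[|[|[|j]]]]]] Hj] //.
Time all: rewrite /Jf /=.
Time all: rring.
Qed.

Ltac rringH H := rprep; match goal with |- @eq _ ?a ?b => change (@eq R a b) end;
  rewrite /= ?rnatS ?mulr0n in H;
  rewrite ?raddE ?rmulE ?roppE ?r0E ?r1E;
  rewrite ?raddE ?rmulE ?roppE ?r0E ?r1E in H; ring [H].

Lemma lin_sub (a b c d : R) : a - b = d - c -> c = d -> a = b.
Proof. by move=> h hcd; apply/eqP; rewrite -subr_eq0 h hcd subrr. Qed.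

Lemma JQ_QK b x3 x y3 y :
  x3 + y3 - x3 * y3 + x * y + x * y = 1 - 3%:R * b ->
  mkM 6 (Jf b x3 x y3 y) *m mkM 6 (Qf b x3 x y3 y) = mkM 6 (Qf b x3 x y3 y) *m mkM 6 (Kf b x3 x y3 y).
Proof.
move=> hE.
have hE' : x3 * y3 = x3 + y3 + x * y + x * y - 1 + 3%:R * b.
  by apply: (lin_sub _ hE); rring.
rewrite !mul_mk; apply/matrixP => i j; rewrite !mkME.
case: i => [[|[|[|[|[|[|i]]]]]] Hi] //; case: j => [[|[|[|[|[|[|j]]]]]] Hj] //.
all: rewrite !big_nat_recl // big_geq // /Jf /Qf /Kf /=.
Time all: rringH hE'.
Qed.

Lemma detQ b x3 x y3 y : \det (mkM 6 (Qf b x3 x y3 y)) = - (4%:R * y3).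
Proof.
rewrite (@det_split_u _ 1 5); last first.
  by move=> i j; case: i => [|[|[|[|[|i]]]]] //; case: j.
rewrite det_mk1 /=.
do 5 (rewrite !det_row0 !big_nat_recl // !big_geq // /bump /= ?(mul0r, add0r, addr0)).
rewrite ?det_mx00.
rring.
Qed.
End Main.
From HB Require Import structures.
From mathcomp Require Import all_boot all_order all_algebra.
From Stdlib Require Import Ring FunctionalExtensionality.
Import Order.TTheory GRing.Theory Num.Theory.
Local Open Scope ring_scope.
Set Implicit Arguments. Unset Strict Implicit. Unset Printing Implicit Defensive.

Section Main2.
Variable R : rcfType.
Add Ring Rr2 : (RTh R).
Add Ring Pr2 : (PTh R).
Notation PR := {poly R}.
Ltac rprepb := rewrite /= ?rexpS ?expr0 ?rnatS ?mulr0n.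
Ltac rringb := rprepb; match goal with |- @eq _ ?a ?b => change (@eq R a b) end;
  rewrite ?raddE ?rmulE ?roppE ?r0E ?r1E; ring.
Ltac rringHb H := rprepb; match goal with |- @eq _ ?a ?b => change (@eq R a b) end;
  rewrite /= ?rnatS ?mulr0n in H;
  rewrite ?raddE ?rmulE ?roppE ?r0E ?r1E;
  rewrite ?raddE ?rmulE ?roppE ?r0E ?r1E in H; ring [H].
Ltac pringb := rewrite /= ?pexpS ?expr0 ?pnatS ?mulr0n; match goal with |- @eq _ ?a ?b => change (@eq PR a b) end;
  rewrite ?pcE ?pXE ?paddE ?pmulE ?poppE ?p0E ?p1E; ring.
Lemma testr (a c : R) : (a + c) * (a - c) = a * a - c * c.
Proof. rringb. Qed.
Lemma testp (a c : R) : (a%:P + 'X) * (a%:P - 'X) = a%:P * a%:P - 'X * 'X.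
Proof. pringb. Qed.
Ltac pos := first [ assumption | exact: ltr01 | (rewrite ltr0n; done) | (apply: addr_gt0; pos) | (apply: mulr_gt0; pos) ].

Definition k3 (b x3 x y3 y : R) := fun i j => Kf b x3 x y3 y (1 + i)%N (1 + j)%N.
Definition k2 (b x3 x y3 y : R) := fun i j => Kf b x3 x y3 y (4 + i)%N (4 + j)%N.

Lemma Kf00 (b x3 x y3 y : R) : Kf b x3 x y3 y 0 0 = 0.
Proof. by []. Qed.

Lemma charK (b x3 x y3 y : R) : char_poly (mkM 6 (Kf b x3 x y3 y)) =
  'X * ('X ^+ 3 + (cA2 (k3 b x3 x y3 y))%:P * 'X ^+ 2 + (cA1 (k3 b x3 x y3 y))%:P * 'X + (cA0 (k3 b x3 x y3 y))%:P)
     * ('X ^+ 2 + (cB1 (k2 b x3 x y3 y))%:P * 'X + (cB0 (k2 b x3 x y3 y))%:P).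
Proof.
rewrite /char_poly char_mk (@det_split _ 1 5); last first.
  by move=> i j; case: i => [|i] //; case: j => [|[|[|[|[|j]]]]] // _ _; rewrite /= mulr0n subr0.
rewrite det_mk1 eqxx mulr1n Kf00 subr0 -[RHS]mulrA; congr (_ * _).
rewrite (@det_split _ 3 2); last first.
  by move=> i j; case: i => [|[|[|i]]] //; case: j => [|[|j]] // _ _; rewrite /= mulr0n subr0.
rewrite -char3 -char2; congr (\det _ * \det _); apply/matrixP => i j; rewrite !mkME.
all: by rewrite ?/k3 ?/k2 !eqn_add2l.
Qed.

Lemma cert_A2 (b x3 x y3 y p q u v : R) :
  p = 1 - b - y3 - y -> q = 1 - b - x3 - x -> u = 1 - x3 -> v = 1 - y3 ->
  p * q - (x * y + b + b * b) = 0 -> x * p - b * x3 = 0 -> y * q - b * y3 = 0 ->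
  0 < b -> 0 < x3 -> 0 < x -> 0 < y3 -> 0 < y -> 0 < p -> 0 < q -> 0 < u -> 0 < v ->
  0 < cA2 (k3 b x3 x y3 y).
Proof.
move=> ep eqq eu ev h1 h2 h3 hb hx3 hx hy3 hy hp hq hu hv.
have key : cA2 (k3 b x3 x y3 y) - (4%:R * x * y + x3 * v + y3 * u + p + q) =
  0 * (p * q - (x * y + b + b * b)) + 0 * (x * p - b * x3) + 0 * (y * q - b * y3).
  by rewrite ep eqq eu ev /cA2 /cA1 /cA0 /k3 /Kf /=; rringb.
rewrite h1 h2 h3 !mulr0 !addr0 in key.
move/eqP: key; rewrite subr_eq0 => /eqP ->.
pos.
Qed.

Lemma cert_A1 (b x3 x y3 y p q u v : R) :
  p = 1 - b - y3 - y -> q = 1 - b - x3 - x -> u = 1 - x3 -> v = 1 - y3 ->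
  p * q - (x * y + b + b * b) = 0 -> x * p - b * x3 = 0 -> y * q - b * y3 = 0 ->
  0 < b -> 0 < x3 -> 0 < x -> 0 < y3 -> 0 < y -> 0 < p -> 0 < q -> 0 < u -> 0 < v ->
  0 < cA1 (k3 b x3 x y3 y).
Proof.
move=> ep eqq eu ev h1 h2 h3 hb hx3 hx hy3 hy hp hq hu hv.
have key : cA1 (k3 b x3 x y3 y) - (b * b + 4%:R * b * x * y3 + 4%:R * b * y * x3 + b + 2%:R * x * x * y + 2%:R * x * y * y + 2%:R * x * y * x3 + 2%:R * x * y * y3 + x3 * p * v + x3 * q * v + y3 * p * u + y3 * q * u) =
  (1%:R) * (p * q - (x * y + b + b * b)) + (2%:R * y) * (x * p - b * x3) + (2%:R * x) * (y * q - b * y3).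
  by rewrite ep eqq eu ev /cA2 /cA1 /cA0 /k3 /Kf /=; rringb.
rewrite h1 h2 h3 !mulr0 !addr0 in key.
move/eqP: key; rewrite subr_eq0 => /eqP ->.
pos.
Qed.

Lemma cert_A0 (b x3 x y3 y p q u v : R) :
  p = 1 - b - y3 - y -> q = 1 - b - x3 - x -> u = 1 - x3 -> v = 1 - y3 ->
  p * q - (x * y + b + b * b) = 0 -> x * p - b * x3 = 0 -> y * q - b * y3 = 0 ->
  0 < b -> 0 < x3 -> 0 < x -> 0 < y3 -> 0 < y -> 0 < p -> 0 < q -> 0 < u -> 0 < v ->
  0 < cA0 (k3 b x3 x y3 y).
Proof.
move=> ep eqq eu ev h1 h2 h3 hb hx3 hx hy3 hy hp hq hu hv.
have key : cA0 (k3 b x3 x y3 y) - (2%:R * b * b * x3 * y3 + b * b * x3 + b * b * y3 + 2%:R * b * x * y * x3 + 2%:R * b * x * y * y3 + 2%:R * b * x * y3 * y3 + 2%:R * b * y * x3 * x3 + b * x3 * v + b * y3 * u + 2%:R * x * x * y * y3 + 2%:R * x * y * y * x3) =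
  (- 2%:R * x3 * y3 + x3 + y3) * (p * q - (x * y + b + b * b)) + (2%:R * b * y3 + 2%:R * y * x3) * (x * p - b * x3) + (2%:R * b * x3 + 2%:R * x * y3) * (y * q - b * y3).
  by rewrite ep eqq eu ev /cA2 /cA1 /cA0 /k3 /Kf /=; rringb.
rewrite h1 h2 h3 !mulr0 !addr0 in key.
move/eqP: key; rewrite subr_eq0 => /eqP ->.
pos.
Qed.

Lemma cert_H (b x3 x y3 y p q u v : R) :
  p = 1 - b - y3 - y -> q = 1 - b - x3 - x -> u = 1 - x3 -> v = 1 - y3 ->
  p * q - (x * y + b + b * b) = 0 -> x * p - b * x3 = 0 -> y * q - b * y3 = 0 ->
  0 < b -> 0 < x3 -> 0 < x -> 0 < y3 -> 0 < y -> 0 < p -> 0 < q -> 0 < u -> 0 < v ->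
  0 < cA2 (k3 b x3 x y3 y) * cA1 (k3 b x3 x y3 y) - cA0 (k3 b x3 x y3 y).
Proof.
move=> ep eqq eu ev h1 h2 h3 hb hx3 hx hy3 hy hp hq hu hv.
have key : cA2 (k3 b x3 x y3 y) * cA1 (k3 b x3 x y3 y) - cA0 (k3 b x3 x y3 y) - (4%:R * b * b * x * y + 2%:R * b * b * x3 + 2%:R * b * b * y3 + b * b * p + b * b * q + 16%:R * b * x * x * y * y3 + 2%:R * b * x * x * y3 + 16%:R * b * x * y * y * x3 + 4%:R * b * x * y * x3 * y3 + 4%:R * b * x * y + 2%:R * b * x * x3 * y3 * y3 + 10%:R * b * x * x3 * y3 * v + 8%:R * b * x * y3 * y3 * u + 4%:R * b * x * y3 * q + 2%:R * b * y * y * x3 + 2%:R * b * y * x3 * x3 * y3 + 8%:R * b * y * x3 * x3 * v + 10%:R * b * y * x3 * y3 * u + 4%:R * b * y * x3 * p + 2%:R * b * x3 * v + 2%:R * b * y3 * u + b * p + b * q + 8%:R * x * x * x * y * y + 8%:R * x * x * y * y * y + 8%:R * x * x * y * y * x3 + 8%:R * x * x * y * y * y3 + 2%:R * x * x * y * x3 * v + 2%:R * x * y * y * y3 * u + 2%:R * x * y * x3 * x3 * v + 2%:R * x * y * x3 * y3 * p + 2%:R * x * y * x3 * y3 * q + 2%:R * x * y * x3 * v + 2%:R * x * y * y3 * y3 * u + 2%:R * x * y * y3 * u + x3 * x3 * p * v * v + x3 * x3 * q * v * v + 2%:R * x3 * y3 * p * u * v + 2%:R * x3 * y3 * q * u *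 v + x3 * p * p * v + x3 * q * q * v + y3 * y3 * p * u * u + y3 * y3 * q * u * u + y3 * p * p * u + y3 * q * q * u) =
  (4%:R * x * y - 4%:R * x3 * y3 + 2%:R * x3 + 2%:R * y3 + p + q) * (p * q - (x * y + b + b * b)) + (4%:R * b * y3 + 8%:R * x * y * y + 2%:R * x * y + 2%:R * y * y - 12%:R * y * x3 * y3 + 6%:R * y * x3 + 8%:R * y * y3 + 2%:R * y * p) * (x * p - b * x3) + (8%:R * x * x * y + 2%:R * x * x + 2%:R * x * y - 12%:R * x * x3 * y3 + 8%:R * x * x3 + 6%:R * x * y3 + 4%:R * x * p + 2%:R * x * q) * (y * q - b * y3).
  by rewrite ep eqq eu ev /cA2 /cA1 /cA0 /k3 /Kf /=; rringb.
rewrite h1 h2 h3 !mulr0 !addr0 in key.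
move/eqP: key; rewrite subr_eq0 => /eqP ->.
pos.
Qed.

Lemma comb (e f g c : R) : e = - f - c * g -> f = 0 -> g = 0 -> e = 0.
Proof. by move=> -> -> ->; rewrite mulr0 oppr0 addr0. Qed.

Lemma curve_facts (b x3 x y3 y : R) : 0 < x3 -> onCurveC b x3 x y3 y ->
  [/\ (x3 + y3 - x3 * y3 + x * y + x * y) - (1 - 3%:R * b) = 0,
      x * (1 - b - y3 - y) - b * x3 = 0 & y * (1 - b - x3 - x) - b * y3 = 0].
Proof.
move=> hx3 H.
have H0 := H (inord 0); have H1 := H (inord 1); have H4 := H (inord 4).
rewrite /Fsub /symPoint /= !inordK //= in H0 H1 H4.
have hw : x3 + y3 - x3 * y3 + x * y + x * y - (1 - 3%:R * b) = 0.
  move/eqP: H0; rewrite mulf_eq0 (gt_eqF hx3) /= => /eqP H0.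
  by apply: (comb (c := 0) _ H0 H0); rringb.
split => //.
  by apply: (comb (c := x) _ H1 hw); rringb.
by apply: (comb (c := y) _ H4 hw); rringb.
Qed.

Lemma cevalX (z : R * R) : ceval 'X z = z.
Proof. by rewrite (ceval_map _ (z : CC R)) map_polyX hornerX. Qed.
Lemma cevalC (c : R) (z : R * R) : ceval c%:P z = (c, 0).
Proof. by rewrite (ceval_map _ (z : CC R)) map_polyC hornerC. Qed.
Lemma cevalD (p q : {poly R}) (z : R * R) : ceval (p + q) z = cadd (ceval p z) (ceval q z).
Proof. by rewrite !(ceval_map _ (z : CC R)) rmorphD hornerD. Qed.
Lemma cevalM' (p q : {poly R}) (z : R * R) : ceval (p * q) z = cmul (ceval p z) (ceval q z).
Proof. exact: (cevalM p q (z : CC R)). Qed.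

Lemma ceval3 (a c d : R) (u v : R) :
  ceval ('X ^+ 3 + a%:P * 'X ^+ 2 + c%:P * 'X + d%:P) (u, v) =
  (u * u * u - 3%:R * u * v * v + a * (u * u - v * v) + c * u + d,
   3%:R * u * u * v - v * v * v + 2%:R * a * u * v + c * v).
Proof.
rewrite !exprS expr0 mulr1.
rewrite !(cevalD, cevalM', cevalC, cevalX) /cadd /cmul /=.
congr (_, _); rringb.
Qed.

Lemma ceval2 (a c : R) (u v : R) :
  ceval ('X ^+ 2 + a%:P * 'X + c%:P) (u, v) =
  (u * u - v * v + a * u + c, 2%:R * u * v + a * v).
Proof.
rewrite !exprS expr0 mulr1.
rewrite !(cevalD, cevalM', cevalC, cevalX) /cadd /cmul /=.
congr (_, _); rringb.
Qed.

Lemma cmul_eq0 (a c : R * R) : cmul a c = (0, 0) -> a = (0, 0) \/ c = (0, 0).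
Proof.
case: a => a1 a2; case: c => c1 c2; rewrite /cmul /= => [[h1 h2]].
have [n0|nn0] := eqVneq (a1 ^+ 2 + a2 ^+ 2) 0.
  left; move/eqP: n0; rewrite paddr_eq0 ?sqr_ge0 // !sqrf_eq0 => /andP [/eqP -> /eqP ->] //.
right.
have e1 : c1 * (a1 ^+ 2 + a2 ^+ 2) = a1 * (a1 * c1 - a2 * c2) + a2 * (a1 * c2 + a2 * c1) by rringb.
have e2 : c2 * (a1 ^+ 2 + a2 ^+ 2) = a1 * (a1 * c2 + a2 * c1) - a2 * (a1 * c1 - a2 * c2) by rringb.
rewrite h1 h2 !mulr0 addr0 in e1; rewrite h1 h2 !mulr0 subr0 in e2.
move/eqP: e1; rewrite mulf_eq0 (negPf nn0) orbF => /eqP ->.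
by move/eqP: e2; rewrite mulf_eq0 (negPf nn0) orbF => /eqP ->.
Qed.

Ltac nonneg := first [ assumption | exact: ler01 | (rewrite ler0n; done) | (apply: ltW; assumption)
   | (apply: addr_ge0; nonneg) | (apply: mulr_ge0; nonneg) ].

Lemma rh3 (a c d u v : R) : 0 < a -> 0 < c -> 0 < d -> 0 < a * c - d ->
  u * u * u - 3%:R * u * v * v + a * (u * u - v * v) + c * u + d = 0 ->
  3%:R * u * u * v - v * v * v + 2%:R * a * u * v + c * v = 0 -> u < 0.
Proof.
move=> ha hc hd hH hre him; rewrite ltNge; apply/negP => hu.
have eim : 3%:R * u * u * v - v * v * v + 2%:R * a * u * v + c * v =
  v * (3%:R * u * u - v * v + 2%:R * a * u + c) by rringb.
rewrite eim in him; move/eqP: him; rewrite mulf_eq0 => /orP [/eqP hv | /eqP hW].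
  rewrite hv in hre.
  have : 0 < u * u * u + a * (u * u) + c * u + d.
    by apply: ltr_wpDl => //; nonneg.
  have -> : u * u * u + a * (u * u) + c * u + d =
    u * u * u - 3%:R * u * 0 * 0 + a * (u * u - 0 * 0) + c * u + d by rringb.
  by rewrite hre ltxx.
have ere : u * u * u - 3%:R * u * v * v + a * (u * u - v * v) + c * u + d =
  - (8%:R * u * u * u + 8%:R * a * u * u + 2%:R * (a * a + c) * u) - (a * c - d)
  + (3%:R * u + a) * (3%:R * u * u - v * v + 2%:R * a * u + c) by rringb.
rewrite ere hW mulr0 addr0 in hre.
have : 0 < (8%:R * u * u * u + 8%:R * a * u * u + 2%:R * (a * a + c) * u) + (a * c - d).
  by apply: ltr_wpDl => //; nonneg.
have -> : (8%:R * u * u * u + 8%:R * a * u * u + 2%:R * (a * a + c) * u) + (a * c - d) =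
  - (- (8%:R * u * u * u + 8%:R * a * u * u + 2%:R * (a * a + c) * u) - (a * c - d)) by rringb.
by rewrite hre oppr0 ltxx.
Qed.

Lemma rh2 (a c u v : R) : 0 < a -> 0 < c ->
  u * u - v * v + a * u + c = 0 -> 2%:R * u * v + a * v = 0 -> u < 0.
Proof.
move=> ha hc hre him; rewrite ltNge; apply/negP => hu.
have eim : 2%:R * u * v + a * v = v * (2%:R * u + a) by rringb.
rewrite eim in him; move/eqP: him; rewrite mulf_eq0 => /orP [/eqP hv | /eqP hW].
  rewrite hv in hre.
  have : 0 < u * u + a * u + c by apply: ltr_wpDl => //; nonneg.
  have -> : u * u + a * u + c = u * u - 0 * 0 + a * u + c by rringb.
  by rewrite hre ltxx.
have : 0 < 2%:R * u + a by apply: ltr_wpDl => //; nonneg.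
by rewrite hW ltxx.
Qed.

Lemma comb3 (e f g h : R) : e = - f - g - h -> f = 0 -> g = 0 -> h = 0 -> e = 0.
Proof. by move=> -> -> -> ->; rewrite !oppr0 !addr0. Qed.

Lemma hor3 (a c d : R) : ('X ^+ 3 + a%:P * 'X ^+ 2 + c%:P * 'X + d%:P).[0] = d.
Proof. rewrite !hornerE; rringb. Qed.
Lemma hor2 (a c : R) : ('X ^+ 2 + a%:P * 'X + c%:P).[0] = c.
Proof. rewrite !hornerE; rringb. Qed.

Lemma main_aux (b x3 x y3 y : R) :
  0 < b -> b <= 100%:R^-1 ->
  0 < x3 -> 0 < y3 -> 0 < x -> 0 < y ->
  onCurveC b x3 x y3 y ->
  let J := jacobianF b (symPoint x3 x y3 y) in
  mup 0 (char_poly J) = 1%N /\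
  (forall lam : R * R, ceigenvalue J lam -> lam <> (0, 0) -> lam.1 < 0).
Proof.
move=> hb _ hx3 hy3 hx hy hC J.
have [hw h2 h3] := curve_facts hx3 hC.
have hp : 0 < 1 - b - y3 - y.
  have : 0 < x * (1 - b - y3 - y).
    by move/eqP: h2; rewrite subr_eq0 => /eqP ->; apply: mulr_gt0.
  by rewrite pmulr_rgt0.
have hq : 0 < 1 - b - x3 - x.
  have : 0 < y * (1 - b - x3 - x).
    by move/eqP: h3; rewrite subr_eq0 => /eqP ->; apply: mulr_gt0.
  by rewrite pmulr_rgt0.
have hu : 0 < 1 - x3.
  have -> : 1 - x3 = (1 - b - x3 - x) + b + x by rringb.
  pos.
have hv : 0 < 1 - y3.
  have -> : 1 - y3 = (1 - b - y3 - y) + b + y by rringb.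
  pos.
have hr1 : (1 - b - y3 - y) * (1 - b - x3 - x) - (x * y + b + b * b) = 0.
  by apply: (comb3 _ hw h2 h3); rringb.
have hE : x3 + y3 - x3 * y3 + x * y + x * y = 1 - 3%:R * b.
  by move/eqP: hw; rewrite subr_eq0 => /eqP.
have hchar : char_poly J =
  'X * ('X ^+ 3 + (cA2 (k3 b x3 x y3 y))%:P * 'X ^+ 2 + (cA1 (k3 b x3 x y3 y))%:P * 'X + (cA0 (k3 b x3 x y3 y))%:P)
     * ('X ^+ 2 + (cB1 (k2 b x3 x y3 y))%:P * 'X + (cB0 (k2 b x3 x y3 y))%:P).
  rewrite /J jac_eq (char_sim (JQ_QK hE)) ?charK //.
  by rewrite detQ oppr_eq0 mulf_neq0 ?pnatr_eq0 // gt_eqF.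
have hA2 := cert_A2 (b:=b) (x3:=x3) (x:=x) (y3:=y3) (y:=y) erefl erefl erefl erefl hr1 h2 h3 hb hx3 hx hy3 hy hp hq hu hv.
have hA1 := cert_A1 (b:=b) (x3:=x3) (x:=x) (y3:=y3) (y:=y) erefl erefl erefl erefl hr1 h2 h3 hb hx3 hx hy3 hy hp hq hu hv.
have hA0 := cert_A0 (b:=b) (x3:=x3) (x:=x) (y3:=y3) (y:=y) erefl erefl erefl erefl hr1 h2 h3 hb hx3 hx hy3 hy hp hq hu hv.
have hH := cert_H (b:=b) (x3:=x3) (x:=x) (y3:=y3) (y:=y) erefl erefl erefl erefl hr1 h2 h3 hb hx3 hx hy3 hy hp hq hu hv.
have hB1 : 0 < cB1 (k2 b x3 x y3 y).
  have -> : cB1 (k2 b x3 x y3 y) = (1 - b - y3 - y) + (1 - b - x3 - x) by rewrite /cB1 /k2 /Kf /=; rringb.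
  pos.
have hB0 : 0 < cB0 (k2 b x3 x y3 y).
  have e : cB0 (k2 b x3 x y3 y) = ((1 - b - y3 - y) * (1 - b - x3 - x) - (x * y + b + b * b)) + (b + b * b).
    by rewrite /cB1 /cB0 /k2 /Kf /=; rringb.
  rewrite e hr1 add0r; pos.
split.
  rewrite hchar mupMl; last first.
    by rewrite /root hor2 gt_eqF.
  rewrite mupMl; last first.
    by rewrite /root hor3 gt_eqF.
  have -> : 'X = ('X - 0%:P) ^+ 1 :> {poly R} by rewrite subr0 expr1.
  by rewrite mup_XsubCX eqxx.
move=> [u v] hlam hne /=.
move: hlam; rewrite /ceigenvalue hchar !cevalM' cevalX => /cmul_eq0 [/cmul_eq0 [h | h] | h].
- by [].
- by move: h; rewrite ceval3 => [[h1 h2']]; apply: (rh3 hA2 hA1 hA0 hH h1 h2').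
- by move: h; rewrite ceval2 => [[h1 h2']]; apply: (rh2 hB1 hB0 h1 h2').
Qed.
End Main2.

Unset Implicit Arguments.

Theorem mainTheorem6 (R : rcfType) (b x3 x y3 y : R) :
  0 < b -> b <= 100%:R^-1 ->
  0 < x3 -> 0 < y3 -> 0 < x -> 0 < y ->
  onCurveC b x3 x y3 y ->
  let J := jacobianF b (symPoint x3 x y3 y) in
  (* 0 is an eigenvalue of J, of algebraic multiplicity exactly one *)
  mup 0 (char_poly J) = 1%N /\
  (* the other five eigenvalues (with multiplicity) have negative real part *)
  (forall lam : R * R, ceigenvalue J lam -> lam <> (0, 0) -> lam.1 < 0).
Proof. exact: main_aux. Qed.
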